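(* Let $\mathcal{H}_1,\mathcal{H}_2$ be finite-dimensional Hilbert spaces of dimensions $d_1,d_2$, and let $f:\mathcal{L}(\mathcal{H}_1)\to\mathcal{L}(\mathcal{H}_2)$ be a linear, unitarity-preserving map with $f(\mathbb{1}_1)=\mathbb{1}_2$. Then $d_2/d_1$ is an integer, and whenever $|\psi\rangle\langle\psi|,|\phi\rangle\langle\phi|\in\mathcal{L}(\mathcal{H}_1)$ are two orthogonal projectors onto pure states, $f(|\psi\rangle\langle\psi|)$ and $f(|\phi\rangle\langle\phi|)$ are two orthogonal projectors of rank $d_2/d_1$.
   Context: A map $f:\mathcal{L}(\mathcal{H}_1)\to\mathcal{L}(\mathcal{H}_2)$ is unitarity preserving if $f(U)$ is unitary for every unitary $U\in\mathcal{L}(\mathcal{H}_1)$. $\mathbb{1}_k$ is the identity on $\mathcal{H}_k$. *)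

(* Defs.v *)
From HB Require Import structures.
From mathcomp Require Import all_boot all_order all_algebra.
From mathcomp Require Import complex.
From mathcomp Require Import reals.
Set Implicit Arguments. Unset Strict Implicit. Unset Printing Implicit Defensive.
Import Order.TTheory GRing.Theory Num.Theory.
Local Open Scope ring_scope.

Definition adjmx (C : numClosedFieldType) (m n : nat) (A : 'M[C]_(m, n)) : 'M[C]_(n, m) :=
  (map_mx Num.conj A)^T.

Definition unitary_mx (C : numClosedFieldType) (n : nat) (U : 'M[C]_n) : Prop :=
  U *m adjmx U = 1%:M /\ adjmx U *m U = 1%:M.

Definition orth_proj (C : numClosedFieldType) (n : nat) (P : 'M[C]_n) : Prop :=
  P *m P = P /\ adjmx P = P.

Definition unit_vec (C : numClosedFieldType) (n : nat) (psi : 'cV[C]_n) : Prop :=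
  adjmx psi *m psi = 1%:M.

Definition ketbra (C : numClosedFieldType) (n : nat) (psi : 'cV[C]_n) : 'M[C]_n :=
  psi *m adjmx psi.

(* Main.v *)
Require Import Defs.
From HB Require Import structures.
From mathcomp Require Import all_boot all_order all_algebra.
From mathcomp Require Import complex.
From mathcomp Require Import reals.
From mathcomp Require Import ring.
Import Order.TTheory GRing.Theory Num.Theory.
Local Open Scope ring_scope.
Set Implicit Arguments. Unset Strict Implicit.

Section Gen.
Variable C : numClosedFieldType.

Lemma adjmxM m n p (A : 'M[C]_(m,n)) (B : 'M[C]_(n,p)) :
  adjmx (A *m B) = adjmx B *m adjmx A.
Proof.
apply/matrixP => i j; rewrite !mxE rmorph_sum; apply: eq_bigr => k _.
by rewrite !mxE rmorphM mulrC.
Qed.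

Lemma adjmxD m n (A B : 'M[C]_(m,n)) : adjmx (A + B) = adjmx A + adjmx B.
Proof. by apply/matrixP => i j; rewrite !mxE rmorphD. Qed.

Lemma adjmxZ m n a (A : 'M[C]_(m,n)) : adjmx (a *: A) = a^* *: adjmx A.
Proof. by apply/matrixP => i j; rewrite !mxE rmorphM. Qed.

Lemma adjmxK m n (A : 'M[C]_(m,n)) : adjmx (adjmx A) = A.
Proof. by apply/matrixP => i j; rewrite !mxE conjCK. Qed.

Lemma adjmx1 n : adjmx (1%:M : 'M[C]_n) = 1%:M.
Proof.
apply/matrixP => i j; rewrite !mxE conjC_nat eq_sym //.
Qed.

Lemma adjmx0 m n : adjmx (0 : 'M[C]_(m,n)) = 0.
Proof. by apply/matrixP => i j; rewrite !mxE conjC0. Qed.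

Lemma adjmx_delta m n (i : 'I_m) (j : 'I_n) :
  adjmx (delta_mx i j : 'M[C]_(m,n)) = delta_mx j i.
Proof.
apply/matrixP => k l; rewrite !mxE.
by rewrite conjC_nat andbC.
Qed.

Definition flin n m (f : 'M[C]_n -> 'M[C]_m) :=
  forall a A B, f (a *: A + B) = a *: f A + f B.

Lemma f0 n m (f : 'M[C]_n -> 'M[C]_m) : flin f -> f 0 = 0.
Proof.
move=> hf; have := hf 1 0 0; rewrite scaler0 addr0 scale1r.
by move/(congr1 (fun x => x - f 0)); rewrite addrK subrr => <-.
Qed.

Lemma fD n m (f : 'M[C]_n -> 'M[C]_m) : flin f -> forall A B, f (A + B) = f A + f B.
Proof. by move=> hf A B; have := hf 1 A B; rewrite !scale1r. Qed.

Lemma fZ n m (f : 'M[C]_n -> 'M[C]_m) : flin f -> forall a A, f (a *: A) = a *: f A.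
Proof. by move=> hf a A; have := hf a A 0; rewrite !addr0 (f0 hf) addr0. Qed.

Lemma fN n m (f : 'M[C]_n -> 'M[C]_m) : flin f -> forall A, f (- A) = - f A.
Proof. by move=> hf A; rewrite -scaleN1r fZ // scaleN1r. Qed.

Lemma fsum n m (f : 'M[C]_n -> 'M[C]_m) : flin f -> forall (I : Type) (r : seq I) (P : pred I) F,
  f (\sum_(i <- r | P i) F i) = \sum_(i <- r | P i) f (F i).
Proof. by move=> hf I r P F; apply: (big_morph f (fD hf) (f0 hf)). Qed.

Lemma tr_rank n (P : 'M[C]_n) : P *m P = P -> \tr P = (\rank P)%:R.
Proof.
move=> hP.
have := mulmx_base P; have := row_base_free P; have := col_base_full P.
move: (col_base P) (row_base P) => cb rb hcb hrb hb.
have h1 : rb *m cb = 1%:M.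
  apply: (row_free_inj hrb).
  apply: (row_full_inj hcb) => /=.
  by rewrite mul1mx !mulmxA hb -mulmxA hb hP.
by rewrite -{1}hb mxtrace_mulC h1 mxtrace1.
Qed.


Lemma mul1P n (P Y : 'M[C]_n) a b :
  (1%:M + a *: P) *m (1%:M + b *: Y) = 1%:M + (a *: P + b *: Y + (a * b) *: (P *m Y)).
Proof.
rewrite !mulmxDl !mulmxDr !mul1mx !mulmx1 -!scalemxAl -!scalemxAr !scalerA.
move: (P *m Y) => PY.
by apply/matrixP => i j; rewrite !mxE; ring.
Qed.

Lemma addrI1 n (X : 'M[C]_n) : 1%:M + X = 1%:M -> X = 0.
Proof. by move=> h; rewrite -(addKr 1%:M X) h addNr. Qed.

Lemma proj_img n m (f : 'M[C]_n -> 'M[C]_m) : flin f -> f 1%:M = 1%:M ->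
  (forall U, unitary_mx U -> unitary_mx (f U)) ->
  forall P, orth_proj P -> orth_proj (f P).
Proof.
move=> hf h1 hu P [hPP hPa].
have key : forall a, a * a^* + a + a^* = 0 ->
    a *: f P + a^* *: adjmx (f P) + (a * a^*) *: (f P *m adjmx (f P)) = 0.
  move=> a ha.
  have hU : unitary_mx (1%:M + a *: P).
    have hadj : adjmx (1%:M + a *: P) = 1%:M + a^* *: P.
      by rewrite adjmxD adjmx1 adjmxZ hPa.
    rewrite /unitary_mx hadj !mul1P hPP -!scalerDl.
    have -> : a + a^* + a * a^* = 0 by rewrite -ha; ring.
    have -> : a^* + a + a^* * a = 0 by rewrite -ha; ring.
    by rewrite scale0r addr0.
  have := hu _ hU; rewrite (fD hf) (fZ hf) h1 => -[hU1 _].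
  move: hU1; rewrite adjmxD adjmx1 adjmxZ mul1P; exact: addrI1.
have E1 := key (-2).
have E2 := key ('i - 1).
have c2 : (-2:C)^* = -2 by apply/CrealP; rewrite rpredN realn.
have c3 : ('i - 1 :C)^* = -'i - 1 by rewrite raddfB /= conjCi conjC1.
rewrite c2 in E1; rewrite c3 in E2.
have ha1 : -2 * -2 + -2 + -2 = 0 :> C by ring.
have ha2 : ('i - 1) * (- 'i - 1) + ('i - 1) + (- 'i - 1) = 0 :> C.
  have -> : ('i - 1) * (- 'i - 1) + ('i - 1) + (- 'i - 1) = - ('i * 'i) - 1 :> C by ring.
  by rewrite mulCii opprK subrr.
move: (E1 ha1) (E2 ha2) => {E1 E2 key} E1 E2.
have hsa : adjmx (f P) = f P.
  apply/matrixP => i j.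
  move/matrixP: E1 => /(_ i j); move/matrixP: E2 => /(_ i j); rewrite !mxE.
  move: ((f P j i)^*) (f P i j) (\sum_j0 _) => y q s e2 e1.
  apply/eqP; rewrite eq_sym -subr_eq0.
  have : (2 * 'i) * (q - y) = 2 * (('i - 1) * q + (- 'i - 1) * y + (('i - 1) * (- 'i - 1)) * s)
     - (-2 * q + -2 * y + (-2 * -2) * s).
    have hii : ('i - 1) * (- 'i - 1) = 2 :> C.
      have -> : ('i - 1) * (- 'i - 1) = - ('i * 'i) + 1 :> C by ring.
      by rewrite mulCii opprK.
    rewrite hii; ring.
  rewrite e1 e2 mulr0 subr0 => /eqP; rewrite !mulf_eq0 pnatr_eq0 (negPf (neq0Ci C)) /=.
  by [].
split=> //.
rewrite hsa in E1.
apply/matrixP => i j.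
move/matrixP: E1 => /(_ i j); rewrite !mxE.
move: (f P i j) (\sum_j0 _) => q s e1.
apply/eqP; rewrite -subr_eq0.
have : 4 * (s - q) = -2 * q + -2 * q + -2 * -2 * s by ring.
rewrite e1 => /eqP; rewrite mulf_eq0 pnatr_eq0 /=.
by [].
Qed.


Lemma orth_sum n (A B : 'M[C]_n) : A *m A = A -> B *m B = B ->
  (A + B) *m (A + B) = A + B -> A *m B = 0.
Proof.
move=> hA hB hS.
have H0 : A *m B + B *m A = 0.
  move: hS; rewrite mulmxDl !mulmxDr hA hB.
  move: (A *m B) (B *m A) => X Y h.
  apply/matrixP=> i j; move/matrixP: h => /(_ i j); rewrite !mxE => h.
  apply/eqP; rewrite -subr_eq0.
  have -> : X i j + Y i j - 0 = (A i j + X i j + (Y i j + B i j)) - (A i j + B i j) by ring.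
  by rewrite h subrr.
have H1 : A *m B + A *m B *m A = 0.
  by have := congr1 (mulmx A) H0; rewrite mulmxDr !mulmxA hA mulmx0.
have H2 : A *m B *m A + B *m A = 0.
  by have := congr1 (mulmx^~ A) H0; rewrite /= mulmxDl -(mulmxA B) hA mul0mx.
move: (A *m B) (B *m A) (A *m B *m A) H0 H1 H2 => X Y Z H0 H1 H2.
apply/matrixP=> i j.
move/matrixP: H0 => /(_ i j); move/matrixP: H1 => /(_ i j); move/matrixP: H2 => /(_ i j).
rewrite !mxE => h2 h1 h0.
have : 2 * X i j = (X i j + Y i j) + (X i j + Z i j) - (Z i j + Y i j) by ring.
rewrite h0 h1 h2 !addr0 subrr => /eqP; rewrite mulf_eq0 pnatr_eq0 /= => /eqP.
by [].
Qed.

Lemma sq3 n (A B Z : 'M[C]_n) a b c :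
  A *m A = A -> B *m B = B -> A *m B = 0 -> B *m A = 0 ->
  (a *: A + b *: B + c *: Z) *m (a *: A + b *: B + c *: Z) =
  (a * a) *: A + (b * b) *: B + (c * c) *: (Z *m Z)
  + (a * c) *: (A *m Z + Z *m A) + (b * c) *: (B *m Z + Z *m B).
Proof.
move=> hA hB hAB hBA.
rewrite !mulmxDl !mulmxDr -!scalemxAl -!scalemxAr !scalerA hA hB hAB hBA.
move: (Z *m Z) (A *m Z) (Z *m A) (B *m Z) (Z *m B) => ZZ AZ ZA BZ ZB.
by apply/matrixP => i j; rewrite !mxE; ring.
Qed.

Lemma alg_key n (A B Z : 'M[C]_n) :
  A *m A = A -> B *m B = B -> A *m B = 0 -> B *m A = 0 ->
  let Q a b c := a *: A + b *: B + c *: Z in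
  Q 9 16 12 *m Q 9 16 12 = 25 *: Q 9 16 12 ->
  Q 9 16 (-12) *m Q 9 16 (-12) = 25 *: Q 9 16 (-12) ->
  Q 16 9 12 *m Q 16 9 12 = 25 *: Q 16 9 12 ->
  [/\ Z *m Z = A + B, A *m Z + Z *m A = Z & B *m Z + Z *m B = Z].
Proof.
move=> hA hB hAB hBA Q.
rewrite /Q !sq3 //.
move: (Z *m Z) (A *m Z + Z *m A) (B *m Z + Z *m B) => W U V E1 E2 E3.
have e : forall i j, [/\ W i j = A i j + B i j, U i j = Z i j & V i j = Z i j].
  move=> i j.
  move/matrixP: E1 => /(_ i j); move/matrixP: E2 => /(_ i j); move/matrixP: E3 => /(_ i j).
  rewrite !mxE.
  move: (W i j) (U i j) (V i j) (A i j) (B i j) (Z i j) => w u v x y z e3 e2 e1.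
  have hw : 288 * (w - (x + y)) = 0.
    have -> : 288 * (w - (x + y)) =
      (9 * 9 * x + 16 * 16 * y + 12 * 12 * w + 9 * 12 * u + 16 * 12 * v
        - 25 * (9 * x + 16 * y + 12 * z))
    + (9 * 9 * x + 16 * 16 * y + -12 * -12 * w + 9 * -12 * u + 16 * -12 * v
        - 25 * (9 * x + 16 * y + -12 * z)) by ring.
    by rewrite e1 e2 !subrr addr0.
  have huv : 84 * (u - v) = 0.
    have -> : 84 * (u - v) =
      (16 * 16 * x + 9 * 9 * y + 12 * 12 * w + 16 * 12 * u + 9 * 12 * v
        - 25 * (16 * x + 9 * y + 12 * z))
    - (9 * 9 * x + 16 * 16 * y + 12 * 12 * w + 9 * 12 * u + 16 * 12 * v
        - 25 * (9 * x + 16 * y + 12 * z)) by ring.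
    by rewrite e1 e3 !subrr.
  move: huv => /eqP; rewrite mulf_eq0 pnatr_eq0 /= subr_eq0 => /eqP huv.
  have hu : 600 * (u - z) = 0.
    have -> : 600 * (u - z) =
      (9 * 9 * x + 16 * 16 * y + 12 * 12 * w + 9 * 12 * u + 16 * 12 * v
        - 25 * (9 * x + 16 * y + 12 * z))
    - (9 * 9 * x + 16 * 16 * y + -12 * -12 * w + 9 * -12 * u + 16 * -12 * v
        - 25 * (9 * x + 16 * y + -12 * z)) + 384 * (u - v) by ring.
    by rewrite e1 e2 huv !subrr mulr0 addr0.
  move: hw hu => /eqP; rewrite mulf_eq0 pnatr_eq0 /= subr_eq0 => /eqP hw.
  move=> /eqP; rewrite mulf_eq0 pnatr_eq0 /= subr_eq0 => /eqP hu.
  by split => //; rewrite -huv.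
split; apply/matrixP => i j; have [h1 h2 h3] := e i j; rewrite ?mxE //.
Qed.


Lemma rank_eq n (A B Z : 'M[C]_n) :
  A *m A = A -> B *m B = B -> A *m B = 0 -> B *m A = 0 ->
  Z *m Z = A + B -> A *m Z + Z *m A = Z -> B *m Z + Z *m B = Z ->
  \rank A = \rank B.
Proof.
move=> hA hB hAB hBA hW hU hV.
have hA' : A = (A *m Z *m B) *m (Z *m A).
  have hAZ : A *m Z = A *m Z *m B.
    by rewrite -{1}hV mulmxDr mulmxA hAB mul0mx add0r mulmxA.
  by rewrite -hAZ mulmxA -(mulmxA A Z Z) hW mulmxDr hA hAB addr0 hA.
have hB' : B = (B *m Z *m A) *m (Z *m B).
  have hBZ : B *m Z = B *m Z *m A.
    by rewrite -{1}hU mulmxDr mulmxA hBA mul0mx add0r mulmxA.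
  by rewrite -hBZ mulmxA -(mulmxA B Z Z) hW mulmxDr hB hBA add0r hB.
apply/eqP; rewrite eqn_leq; apply/andP; split.
  by rewrite {1}hA'; apply: leq_trans (mxrankM_maxl _ _) _; apply: mxrankM_maxr.
by rewrite {1}hB'; apply: leq_trans (mxrankM_maxl _ _) _; apply: mxrankM_maxr.
Qed.

Lemma ketbra_lin n (u v : 'cV[C]_n) a b :
  ketbra (a *: u + b *: v) = (a * a^*) *: ketbra u + (b * b^*) *: ketbra v
    + (a * b^*) *: (u *m adjmx v) + (b * a^*) *: (v *m adjmx u).
Proof.
rewrite /ketbra adjmxD !adjmxZ mulmxDl !mulmxDr -!scalemxAl -!scalemxAr !scalerA.
move: (u *m adjmx u) (u *m adjmx v) (v *m adjmx u) (v *m adjmx v) => UU UV VU VV.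
by apply/matrixP => i j; rewrite !mxE; ring.
Qed.

Lemma inner_lin n (u v : 'cV[C]_n) a b a' b' c :
  adjmx u *m u = c%:M -> adjmx v *m v = c%:M -> adjmx u *m v = 0 ->
  adjmx (a *: u + b *: v) *m (a' *: u + b' *: v) = ((a^* * a' + b^* * b') * c)%:M.
Proof.
move=> hu hv huv.
have hvu : adjmx v *m u = 0 by rewrite -[u]adjmxK -adjmxM huv adjmx0.
rewrite adjmxD !adjmxZ mulmxDl !mulmxDr -!scalemxAl -!scalemxAr !scalerA hu hv huv hvu.
by apply/matrixP => i j; rewrite !mxE; ring.
Qed.

Lemma proj_vec n (w : 'cV[C]_n) (d : C) : d != 0 -> d^* = d -> adjmx w *m w = d%:M ->
  orth_proj (d^-1 *: ketbra w).
Proof.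
move=> hd hdr hw; split.
  rewrite /ketbra -!scalemxAl -!scalemxAr scalerA mulmxA -(mulmxA w) hw.
  rewrite mul_mx_scalar -scalemxAl scalerA; congr (_ *: _).
  by rewrite divfK.
have hdi : (d^-1)^* = d^-1 by apply/CrealP; rewrite rpredV; apply/CrealP.
by rewrite adjmxZ /ketbra adjmxM adjmxK hdi.
Qed.

Lemma proj_add n (P Q : 'M[C]_n) : orth_proj P -> orth_proj Q -> P *m Q = 0 -> Q *m P = 0 ->
  orth_proj (P + Q).
Proof.
move=> [hP hPa] [hQ hQa] hPQ hQP; split.
  by rewrite mulmxDl !mulmxDr hP hQ hPQ hQP addr0 add0r.
by rewrite adjmxD hPa hQa.
Qed.


Lemma scal_cancel m (QQ Q : 'M[C]_m) (s : C) : s != 0 ->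
  (s^-1 * s^-1) *: QQ = s^-1 *: Q -> QQ = s *: Q.
Proof.
move=> hs h; apply/matrixP => i j; move/matrixP: h => /(_ i j); rewrite !mxE => h.
have -> : QQ i j = (s * s) * ((s^-1 * s^-1) * QQ i j) by field.
by rewrite h; field.
Qed.

Lemma realC_nat (k : nat) : (k%:R : C)^* = k%:R.
Proof. by apply/CrealP; rewrite realn. Qed.

Lemma realC_Nnat (k : nat) : (- k%:R : C)^* = - k%:R.
Proof. by apply/CrealP; rewrite rpredN realn. Qed.

Lemma key_vec n m (f : 'M[C]_n -> 'M[C]_m) : flin f -> f 1%:M = 1%:M ->
  (forall U, unitary_mx U -> unitary_mx (f U)) ->
  forall (u v : 'cV[C]_n) (c : C), c != 0 -> c^* = c ->
  adjmx u *m u = c%:M -> adjmx v *m v = c%:M -> adjmx u *m v = 0 ->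
  [/\ orth_proj (f (c^-1 *: ketbra u)), orth_proj (f (c^-1 *: ketbra v)),
      f (c^-1 *: ketbra u) *m f (c^-1 *: ketbra v) = 0 &
      \rank (f (c^-1 *: ketbra u)) = \rank (f (c^-1 *: ketbra v))].
Proof.
move=> hf h1 hu u v c hc hcr huu hvv huv.
have hvu : adjmx v *m u = 0 by rewrite -[u]adjmxK -adjmxM huv adjmx0.
have pu := proj_vec hc hcr huu; have pv := proj_vec hc hcr hvv.
have puv : (c^-1 *: ketbra u) *m (c^-1 *: ketbra v) = 0.
  by rewrite /ketbra -!scalemxAl -!scalemxAr mulmxA -(mulmxA u) huv mulmx0 mul0mx !scaler0.
have pvu : (c^-1 *: ketbra v) *m (c^-1 *: ketbra u) = 0.
  by rewrite /ketbra -!scalemxAl -!scalemxAr mulmxA -(mulmxA v) hvu mulmx0 mul0mx !scaler0.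
have hA := proj_img hf h1 hu pu; have hB := proj_img hf h1 hu pv.
have hS := proj_img hf h1 hu (proj_add pu pv puv pvu).
rewrite (fD hf) in hS.
have hAB := orth_sum hA.1 hB.1 hS.1.
have hBA : f (c^-1 *: ketbra v) *m f (c^-1 *: ketbra u) = 0.
  by apply: orth_sum hB.1 hA.1 _; rewrite addrC; exact: hS.1.
split => //.
set A := f (c^-1 *: ketbra u) in hA hB hS hAB hBA *.
set B := f (c^-1 *: ketbra v) in hA hB hS hAB hBA *.
set Z := f (c^-1 *: (u *m adjmx v + v *m adjmx u)).
have Qeq : forall a b : C, a^* = a -> b^* = b -> a * a + b * b != 0 ->
   ((a*a) *: A + (b*b) *: B + (a*b) *: Z) *m ((a*a) *: A + (b*b) *: B + (a*b) *: Z)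
   = (a*a+b*b) *: ((a*a) *: A + (b*b) *: B + (a*b) *: Z).
  move=> a b ha hb hs.
  have hw := inner_lin a b a b huu hvv huv.
  rewrite ha hb in hw.
  have hd : (a*a+b*b)*c != 0 by rewrite mulf_neq0.
  have hdr : ((a*a+b*b)*c)^* = (a*a+b*b)*c.
    have ra : a \is Num.real by apply/CrealP.
    have rb : b \is Num.real by apply/CrealP.
    have rc : c \is Num.real by apply/CrealP.
    by apply/CrealP; rewrite rpredM ?rpredD ?rpredM.
  have := proj_img hf h1 hu (proj_vec hd hdr hw) => -[hP _].
  have eq : ((a*a+b*b)*c)^-1 *: ketbra (a*:u + b*:v) = (a*a+b*b)^-1 *:
     ((a*a) *: (c^-1 *: ketbra u) + (b*b) *: (c^-1 *: ketbra v)
       + (a*b) *: (c^-1 *: (u *m adjmx v + v *m adjmx u))).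
    rewrite ketbra_lin ha hb /ketbra.
    move: (u *m adjmx u) (u *m adjmx v) (v *m adjmx u) (v *m adjmx v) => UU UV VU VV.
    by apply/matrixP=> i j; rewrite !mxE invfM; ring.
  rewrite eq (fZ hf) !(fD hf) (fZ hf (a*a)) (fZ hf (b*b)) (fZ hf (a*b)) -/A -/B -/Z in hP.
  move: hP; rewrite -!scalemxAl -!scalemxAr !scalerA.
  by apply: scal_cancel.
have r3 := realC_nat 3; have r4 := realC_nat 4; have rn4 := realC_Nnat 4.
have := Qeq 3 4 r3 r4; have := Qeq 3 (-4) r3 rn4; have := Qeq 4 3 r4 r3.
have -> : (3 * 3 : C) = 9 by ring.
have -> : (4 * 4 : C) = 16 by ring.
have -> : (-4 * -4 : C) = 16 by ring.
have -> : (3 * 4 : C) = 12 by ring.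
have -> : (4 * 3 : C) = 12 by ring.
have -> : (3 * -4 : C) = -12 by ring.
have -> : (9 + 16 : C) = 25 by ring.
have -> : (16 + 9 : C) = 25 by ring.
have h25 : (25 : C) != 0 by rewrite pnatr_eq0.
move=> /(_ h25) E3 /(_ h25) E2 /(_ h25) E1.
have [hW hU hV] := alg_key hA.1 hB.1 hAB hBA E1 E2 E3.
exact: rank_eq hA.1 hB.1 hAB hBA hW hU hV.
Qed.


Lemma key_tr n m (f : 'M[C]_n -> 'M[C]_m) : flin f -> f 1%:M = 1%:M ->
  (forall U, unitary_mx U -> unitary_mx (f U)) ->
  forall (u v : 'cV[C]_n) (c : C), c != 0 -> c^* = c ->
  adjmx u *m u = c%:M -> adjmx v *m v = c%:M -> adjmx u *m v = 0 ->
  \tr (f (ketbra u)) = \tr (f (ketbra v)).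
Proof.
move=> hf h1 hu u v c hc hcr huu hvv huv.
have [[hA _] [hB _] _ hr] := key_vec hf h1 hu hc hcr huu hvv huv.
have := tr_rank hA; have := tr_rank hB; rewrite hr !(fZ hf) !mxtraceZ => <-.
by apply: mulfI; rewrite invr_eq0.
Qed.

Lemma conj_ki (k : nat) : (k%:R * 'i : C)^* = - (k%:R * 'i).
Proof. by rewrite rmorphM /= conjCi realC_nat mulrN. Qed.

Definition ev n (j : 'I_n) : 'cV[C]_n := delta_mx j 0.

Lemma ev_ketbra n (j l : 'I_n) : ev j *m adjmx (ev l) = delta_mx j l.
Proof. by rewrite /ev adjmx_delta mul_delta_mx. Qed.

Lemma ev_inner n (j l : 'I_n) : adjmx (ev j) *m ev l = (j == l)%:R%:M.
Proof.
rewrite /ev adjmx_delta mul_delta_mx_cond.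
by case: (j == l); apply/matrixP => i k; rewrite !ord1 !mxE /= ?mulr1n ?mulr0n ?eqxx.
Qed.

Lemma T_comb n m (f : 'M[C]_n -> 'M[C]_m) : flin f -> forall (j l : 'I_n) a b,
  \tr (f (ketbra (a *: ev j + b *: ev l))) =
  a * a^* * \tr (f (delta_mx j j)) + b * b^* * \tr (f (delta_mx l l))
  + a * b^* * \tr (f (delta_mx j l)) + b * a^* * \tr (f (delta_mx l j)).
Proof.
move=> hf j l a b.
by rewrite ketbra_lin /ketbra !ev_ketbra !(fD hf) !(fZ hf) !mxtraceD !mxtraceZ.
Qed.

Lemma basis_pair n m (f : 'M[C]_n -> 'M[C]_m) : flin f -> f 1%:M = 1%:M ->
  (forall U, unitary_mx U -> unitary_mx (f U)) ->
  forall (j l : 'I_n) a b a' b' (c : C), j != l -> c != 0 -> c^* = c ->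
  a^* * a + b^* * b = c -> a'^* * a' + b'^* * b' = c -> a^* * a' + b^* * b' = 0 ->
  \tr (f (ketbra (a *: ev j + b *: ev l))) = \tr (f (ketbra (a' *: ev j + b' *: ev l))).
Proof.
move=> hf h1 hu j l a b a' b' c hjl hc hcr e1 e2 e3.
have hjj : adjmx (ev j) *m ev j = 1%:M by rewrite ev_inner eqxx.
have hll : adjmx (ev l) *m ev l = 1%:M by rewrite ev_inner eqxx.
have hjl' : adjmx (ev j) *m ev l = 0.
  by rewrite ev_inner (negPf hjl); apply/matrixP => i k; rewrite !mxE mul0rn.
apply: (key_tr hf h1 hu hc hcr).
- by rewrite (inner_lin _ _ _ _ hjj hll hjl') e1 mulr1.
- by rewrite (inner_lin _ _ _ _ hjj hll hjl') e2 mulr1.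
- rewrite (inner_lin _ _ _ _ hjj hll hjl') e3 mul0r.
  by apply/matrixP => i k; rewrite !mxE mul0rn.
Qed.

Lemma T_offdiag n m (f : 'M[C]_n -> 'M[C]_m) : flin f -> f 1%:M = 1%:M ->
  (forall U, unitary_mx U -> unitary_mx (f U)) ->
  forall (j l : 'I_n), j != l ->
  \tr (f (delta_mx j j)) = \tr (f (delta_mx l l)) /\ \tr (f (delta_mx j l)) = 0.
Proof.
move=> hf h1 hu j l hjl.
have hd : forall k : 'I_n, ketbra (ev k) = delta_mx k k by move=> k; exact: ev_ketbra.
have Ea : \tr (f (delta_mx j j)) = \tr (f (delta_mx l l)).
  have := basis_pair hf h1 hu (a := 1) (b := 0) (a' := 0) (b' := 1) hjl (oner_neq0 C).
  rewrite conjC1 conjC0 !scale0r !scale1r addr0 add0r !hd; apply => //; ring.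
split => //.
have r3 := realC_nat 3; have r4 := realC_nat 4; have rn3 := realC_Nnat 3.
have i4 := conj_ki 4.
have h25 : (25 : C) != 0 by rewrite pnatr_eq0.
have h25r : (25 : C)^* = 25 by rewrite realC_nat.
have Eb := basis_pair hf h1 hu (a := 3) (b := 4) (a' := 4) (b' := -3) hjl h25 h25r.
have Ec := basis_pair hf h1 hu (a := 3) (b := 4 * 'i) (a' := 4 * 'i) (b' := 3) hjl h25 h25r.
rewrite !T_comb // in Eb Ec.
rewrite r3 r4 rn3 in Eb.
rewrite r3 i4 in Ec.
have hii := mulCii C.
have {}Eb := Eb ltac:(ring) ltac:(ring) ltac:(ring).
have hI : forall z : C, z - 25 = -16 * ('i * 'i + 1) -> z = 25.
  by move=> z hz; apply/eqP; rewrite -subr_eq0 hz hii addNr mulr0.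
have {}Ec := Ec ltac:(apply: hI; ring) ltac:(apply: hI; ring) ltac:(ring).
move: Eb Ec Ea.
move: (\tr (f (delta_mx j j))) (\tr (f (delta_mx l l))) (\tr (f (delta_mx j l)))
  (\tr (f (delta_mx l j))) => x y t1 t2 Eb Ec Ea.
have h1' : 24 * 'i * (t2 - t1) = 0.
  have -> : 24 * 'i * (t2 - t1) =
     (3 * 3 * x + 4 * 'i * - (4 * 'i) * y + 3 * - (4 * 'i) * t1 + 4 * 'i * 3 * t2)
   - (4 * 'i * - (4 * 'i) * x + 3 * 3 * y + 4 * 'i * 3 * t1 + 3 * - (4 * 'i) * t2)
   - (9 + 16 * 'i * 'i) * (x - y) by ring.
  by rewrite Ec Ea !subrr mulr0 subr0.
move: h1' => /eqP; rewrite !mulf_eq0 pnatr_eq0 (negPf (neq0Ci C)) /= subr_eq0 => /eqP h12.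
have : 48 * t1 = 0.
  have -> : 48 * t1 =
     (3 * 3 * x + 4 * 4 * y + 3 * 4 * t1 + 4 * 3 * t2)
   - (4 * 4 * x + -3 * -3 * y + 4 * -3 * t1 + -3 * 4 * t2)
   + 7 * (x - y) + 24 * (t1 - t2) by ring.
  by rewrite Eb Ea h12 !subrr !mulr0 !addr0.
by move/eqP; rewrite mulf_eq0 pnatr_eq0 /= => /eqP.
Qed.


Lemma T_formula n m (f : 'M[C]_n -> 'M[C]_m) : flin f -> f 1%:M = 1%:M ->
  (forall U, unitary_mx U -> unitary_mx (f U)) ->
  forall (j0 : 'I_n) M, \tr (f M) = \tr M * \tr (f (delta_mx j0 j0)).
Proof.
move=> hf h1 hu j0 M.
rewrite {1}(matrix_sum_delta M) (fsum hf) raddf_sum.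
rewrite /mxtrace mulr_suml; apply: eq_bigr => i _.
rewrite (fsum hf) raddf_sum (bigD1 i) //= big1 ?addr0.
  rewrite (fZ hf) mxtraceZ; congr (_ * _).
  have [->|hne] := eqVneq i j0; first by [].
  by have [-> _] := T_offdiag hf h1 hu hne.
move=> l hl; rewrite (fZ hf) mxtraceZ.
have hil : i != l by rewrite eq_sym.
by have [_ ->] := T_offdiag hf h1 hu hil; rewrite mulr0.
Qed.

End Gen.

Unset Implicit Arguments.
Set Strict Implicit.

Theorem lemma1 (R : realType) (d1 d2 : nat) (hd1 : (0 < d1)%N) (hd2 : (0 < d2)%N)
  (f : 'M[R[i]]_d1 -> 'M[R[i]]_d2)
  (f_lin : forall (a : R[i]) (A B : 'M[R[i]]_d1), f (a *: A + B) = a *: f A + f B)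
  (f_unit : forall U : 'M[R[i]]_d1, unitary_mx U -> unitary_mx (f U))
  (f_one : f 1%:M = 1%:M) :
  exists k : nat, d2 = (k * d1)%N /\
    forall psi phi : 'cV[R[i]]_d1,
      unit_vec psi -> unit_vec phi -> adjmx psi *m phi = 0 ->
      [/\ orth_proj (f (ketbra psi)), orth_proj (f (ketbra phi)),
          f (ketbra psi) *m f (ketbra phi) = 0,
          \rank (f (ketbra psi)) = k & \rank (f (ketbra phi)) = k].
Proof.
have hf : flin f by exact: f_lin.
pose j0 : 'I_d1 := Ordinal hd1.
have hP0 : orth_proj (delta_mx j0 j0 : 'M[R[i]]_d1).
  by split; rewrite ?mul_delta_mx ?adjmx_delta.
have [hQ0 _] := proj_img hf f_one f_unit hP0.
have ht := tr_rank hQ0.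
exists (\rank (f (delta_mx j0 j0))); split.
  apply/eqP; rewrite -(eqr_nat R[i]) natrM -ht.
  have := T_formula hf f_one f_unit j0 1%:M.
  by rewrite f_one !mxtrace1 mulrC => ->.
have hrk : forall psi : 'cV[R[i]]_d1, unit_vec psi ->
    \rank (f (ketbra psi)) = \rank (f (delta_mx j0 j0)).
  move=> psi hpsi.
  have hc1 : (1 : R[i]) != 0 by exact: oner_neq0.
  have := proj_vec hc1 (conjC1 _) hpsi; rewrite invr1 scale1r => hp.
  have [hA _] := proj_img hf f_one f_unit hp.
  apply/eqP; rewrite -(eqr_nat R[i]) -ht -(tr_rank hA).
  rewrite (T_formula hf f_one f_unit j0) /ketbra mxtrace_mulC hpsi mxtrace1 mul1r.
  by [].
move=> psi phi hpsi hphi hpp.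
have hc1 : (1 : R[i]) != 0 by exact: oner_neq0.
have := key_vec hf f_one f_unit hc1 (conjC1 _) hpsi hphi hpp.
rewrite invr1 !scale1r => -[hA hB hAB _].
by split => //; apply: hrk.
Qed.
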